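(* Let $k:\mathbb{R}_+\to\mathbb{R}_+$ be a non-increasing positive function, let $\sigma>0$ and $\delta\in(0,0.5]$. Let $P=\{p_1,\dots,p_N\}\subset\mathbb{R}$ be a univariate data set and let $\Delta=[a,b]$ with $a<b$. Suppose $|P\cap\Delta|\ge 2$, $a\ge\min P$ and $b\le\max P$. Define $\Delta'=[a',b']$ with $a'=(a+\min(P\cap\Delta))/2$ and $b'=(b+\max(P\cap\Delta))/2$, and let $M=\max_{x\in\Delta'}\min_{i=1,\dots,N}|x-p_i|$. Let $L(P)$ be the standard graph Laplacian of the graph on vertices $P$ with similarities $s(P,i,j)=k(|T_\Delta(p_i)-T_\Delta(p_j)|/\sigma)$. Then $$\lambda_2(L(P))\ge \frac{1}{|P|^3}\,k\!\left(\frac{2M+\delta C}{\sigma}\right),$$ where $C=\max\{D,D^{1-\delta}\}$ and $D=\max\{a-\min P,\ \max P-b\}$.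
   Context: For an interval $\Delta=[a,b]$ and $\delta\in(0,0.5]$, $T_\Delta:\mathbb{R}\to\mathbb{R}$ is defined by $T_\Delta(z)=-\delta\big(a-z+(\delta(1-\delta))^{1/\delta}\big)^{1-\delta}+\delta(\delta(1-\delta))^{(1-\delta)/\delta}$ for $z<a$; $T_\Delta(z)=z-a$ for $a\le z\le b$; $T_\Delta(z)=\delta\big(z-b+(\delta(1-\delta))^{1/\delta}\big)^{1-\delta}-\delta(\delta(1-\delta))^{(1-\delta)/\delta}+(b-a)$ for $z>b$. For an affinity matrix $A$ with degree matrix $D=\mathrm{diag}(\sum_jA_{ij})$, the standard Laplacian is $D-A$. $\lambda_2(\cdot)$ is the second smallest eigenvalue; $|P|=N$. *)

(* Defs.v *)
From HB Require Import structures.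
From mathcomp Require Import all_boot all_order all_algebra.
From mathcomp Require Import classical_sets reals exp.
Set Implicit Arguments. Unset Strict Implicit. Unset Printing Implicit Defensive.
Import Order.TTheory GRing.Theory Num.Theory.
Local Open Scope ring_scope.

Section Defs.
Variable R : realType.

Definition seqmin (s : seq R) : R := foldr Num.min (head 0 s) s.
Definition seqmax (s : seq R) : R := foldr Num.max (head 0 s) s.

Definition T_Delta (delta a b : R) (z : R) : R :=
  let c  := powR (delta * (1 - delta)) (1 / delta) in
  let c2 := powR (delta * (1 - delta)) ((1 - delta) / delta) in
  if z < a then - delta * powR (a - z + c) (1 - delta) + delta * c2
  else if z <= b then z - a
  else delta * powR (z - b + c) (1 - delta) - delta * c2 + (b - a).

Definition laplacian (n : nat) (A : 'M[R]_n) : 'M[R]_n :=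
  diag_mx (\row_i \sum_j A i j) - A.

Definition affinity (k : R -> R) (sigma delta a b : R) (P : seq R)
  : 'M[R]_(size P) :=
  \matrix_(i < size P, j < size P)
     k (`|T_Delta delta a b P`_i - T_Delta delta a b P`_j| / sigma).

(* eigenvalues of a square matrix, listed with algebraic multiplicity in
   nondecreasing order: the char. polynomial splits with these roots *)
Definition sorted_eigenvalues (n : nat) (L : 'M[R]_n) (s : seq R) : Prop :=
  sorted <=%R s /\ char_poly L = \prod_(x <- s) ('X - x%:P).

End Defs.

(* Main.v *)
Require Import Defs.
From HB Require Import structures.
From mathcomp Require Import all_boot all_order all_algebra.
From mathcomp Require Import classical_sets reals exp.
From mathcomp Require Import ring lra zify.
Import Order.TTheory GRing.Theory Num.Theory.
Local Open Scope ring_scope.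
Set Warnings "-notation-overridden,-ambiguous-paths".

Lemma foldr_min_le (R : realType) (s : seq R) e z :
  z \in s -> foldr Num.min e s <= z.
Proof.
elim: s => //= x s IH; rewrite in_cons => /orP[/eqP->|zs].
  by rewrite ge_min lexx.
by rewrite ge_min IH ?orbT.
Qed.

Lemma foldr_min_mem (R : realType) (s : seq R) e :
  foldr Num.min e s \in e :: s.
Proof.
elim: s => /= [|x s IH]; first by rewrite mem_head.
rewrite /Num.min; case: ifP => _; first by rewrite !in_cons eqxx orbT.
move: IH; rewrite !in_cons => /orP[->//|->]; by rewrite !orbT.
Qed.

Lemma seqmin_le (R : realType) (s : seq R) z : z \in s -> seqmin s <= z.
Proof. exact: foldr_min_le. Qed.

Lemma seqmin_mem (R : realType) (s : seq R) : s != [::] -> seqmin s \in s.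
Proof.
case: s => // x s _; rewrite /seqmin.
have := @foldr_min_mem _ (x :: s) x; rewrite in_cons => /orP[/eqP->|//].
exact: mem_head.
Qed.

Lemma foldr_max_ge (R : realType) (s : seq R) e z :
  z \in s -> z <= foldr Num.max e s.
Proof.
elim: s => //= x s IH; rewrite in_cons => /orP[/eqP->|zs].
  by rewrite le_max lexx.
by rewrite le_max IH ?orbT.
Qed.

Lemma foldr_max_mem (R : realType) (s : seq R) e :
  foldr Num.max e s \in e :: s.
Proof.
elim: s => /= [|x s IH]; first by rewrite mem_head.
rewrite /Num.max; case: ifP => _.
  move: IH; rewrite !in_cons => /orP[->//|->]; by rewrite !orbT.
by rewrite !in_cons eqxx orbT.
Qed.

Lemma seqmax_ge (R : realType) (s : seq R) z : z \in s -> z <= seqmax s.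
Proof. exact: foldr_max_ge. Qed.

Lemma seqmax_mem (R : realType) (s : seq R) : s != [::] -> seqmax s \in s.
Proof.
case: s => // x s _; rewrite /seqmax.
have := @foldr_max_mem _ (x :: s) x; rewrite in_cons => /orP[/eqP->|//].
exact: mem_head.
Qed.

Lemma powR_subadd (R : realType) (r u v : R) : 0 < r <= 1 -> 0 <= u -> 0 <= v ->
  powR (u + v) r <= powR u r + powR v r.
Proof.
move=> /andP[r0 r1] u0 v0.
have [->|uneq] := eqVneq u 0; first by rewrite add0r powR0 ?gt_eqF // add0r.
have [->|vneq] := eqVneq v 0; first by rewrite addr0 powR0 ?gt_eqF // addr0.
have up : 0 < u by rewrite lt_neqAle eq_sym uneq.
have vp : 0 < v by rewrite lt_neqAle eq_sym vneq.
set t := u + v; have tp : 0 < t by rewrite /t addr_gt0.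
have Hu : u = (u / t) * t by rewrite divfK // gt_eqF.
have Hv : v = (v / t) * t by rewrite divfK // gt_eqF.
have su : u / t <= powR (u / t) r.
  apply: ger1_powR => //; rewrite divr_gt0 //= ler_pdivrMr // mul1r /t.
  by rewrite lerDl ltW.
have sv : v / t <= powR (v / t) r.
  apply: ger1_powR => //; rewrite divr_gt0 //= ler_pdivrMr // mul1r /t.
  by rewrite lerDr ltW.
have ut : 0 <= u / t by rewrite divr_ge0 // ltW.
have vt : 0 <= v / t by rewrite divr_ge0 // ltW.
rewrite {1}Hu {1}Hv (powRM _ ut (ltW tp)) (powRM _ vt (ltW tp)).
have tr : 0 <= powR t r by apply: powR_ge0.
have E : powR t r = (u / t + v / t) * powR t r.
  by rewrite -mulrDl -/t divff ?gt_eqF // mul1r.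
rewrite {1}E mulrDl; apply: lerD; exact: ler_wpM2r.
Qed.

Section T.
Variable R : realType.
Implicit Types (delta a b z : R).

Definition cc delta : R := powR (delta * (1 - delta)) (1 / delta).
Definition pw delta (z : R) := powR z (1 - delta).

Lemma c2E delta : 0 < delta ->
  powR (delta * (1 - delta)) ((1 - delta) / delta) = pw delta (cc delta).
Proof.
move=> d0; rewrite /pw /cc -powRrM; congr powR.
by rewrite mulrC mul1r.
Qed.

Lemma T_left delta a b z : 0 < delta -> z < a ->
  T_Delta delta a b z = - delta * pw delta (a - z + cc delta) + delta * pw delta (cc delta).
Proof. by move=> d0 za; rewrite /T_Delta za c2E. Qed.

Lemma T_mid delta a b z : a <= z <= b -> T_Delta delta a b z = z - a.
Proof. by move=> /andP[az zb]; rewrite /T_Delta ltNge az /= zb. Qed.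

Lemma T_right delta a b z : 0 < delta -> a < b -> b < z ->
  T_Delta delta a b z = delta * pw delta (z - b + cc delta) - delta * pw delta (cc delta) + (b - a).
Proof.
move=> d0 ab bz; rewrite /T_Delta c2E //.
have -> : (z < a) = false by apply/negbTE; rewrite -leNgt; apply: ltW; exact: lt_trans bz.
by rewrite leNgt bz.
Qed.


Lemma pw_mono delta u v : 0 < delta <= 1/2 -> 0 <= u -> u <= v -> pw delta u <= pw delta v.
Proof.
move=> /andP[d0 d1] u0 uv; apply: ge0_ler_powR => //; rewrite ?nnegrE //; try lra.
Qed.

Lemma pw_sub delta u v : 0 < delta <= 1/2 -> 0 <= u -> 0 <= v ->
  pw delta (u + v) <= pw delta u + pw delta v.
Proof. move=> /andP[d0 d1] u0 v0; apply: powR_subadd => //; apply/andP; split; lra. Qed.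

Lemma cc_ge0 delta : 0 <= cc delta.
Proof. exact: powR_ge0. Qed.

Lemma gap delta a b (P : seq R) (M C D a' b' x y : R) :
  0 < delta <= 1/2 -> a < b ->
  x \in P -> y \in P -> x < y -> (forall p, p \in P -> p <= x \/ y <= p) ->
  (forall z r, a' <= z <= b' -> (forall p, p \in P -> r <= `|z - p|) -> r <= M) ->
  0 <= M ->
  (forall z, z \in P -> a <= z <= b -> a' <= (a + z) / 2) ->
  (forall z, z \in P -> a <= z <= b -> (b + z) / 2 <= b') ->
  (exists2 z, z \in P & a <= z <= b) ->
  (forall p, p \in P -> a - p <= D /\ p - b <= D) ->
  0 <= D -> pw delta D <= C ->
  0 <= T_Delta delta a b y - T_Delta delta a b x <= 2 * M + delta * C.
Proof.
move=> hd ab xP yP xy cons HM M0 Ha' Hb' [z0 z0P z0ab] HD D0 HC.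
have /andP[d0 d1] := hd.
have c0 := cc_ge0 delta.
have pwC : forall u, 0 <= u <= D -> pw delta u <= C.
  move=> u /andP[u0 uD]; exact: le_trans (pw_mono _ _ _ hd u0 uD) HC.
have pw0 : forall u, 0 <= pw delta u by move=> u; exact: powR_ge0.
have [xa|ax] := ltP x a.
  have [ya|ay] := ltP y a.
  -
    rewrite !T_left //.
    have h1 : pw delta (a - y + cc delta) <= pw delta (a - x + cc delta).
      by apply: pw_mono => //; lra.
    have h2 : pw delta (a - x + cc delta) <= pw delta (y - x) + pw delta (a - y + cc delta).
      have -> : a - x + cc delta = (y - x) + (a - y + cc delta) by ring.
      by apply: pw_sub => //; lra.
    have h3 : pw delta (y - x) <= C.
      have := HD x xP; move=> [h _]; apply: pwC; lra.
    apply/andP; split; nra.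
  have [yb|by'] := leP y b.
  -
    rewrite (T_left _ _ _ x) // (T_mid _ _ _ y) ?ay ?yb //.
    have h1 : pw delta (cc delta) <= pw delta (a - x + cc delta) by apply: pw_mono => //; lra.
    have h2 : pw delta (a - x + cc delta) <= pw delta (a - x) + pw delta (cc delta).
      by apply: pw_sub => //; lra.
    have h3 : pw delta (a - x) <= C.
      have := HD x xP; move=> [h _]; apply: pwC; lra.
    have hM : (y - a) / 2 <= M.
      apply: (HM ((a + y) / 2)).
        apply/andP; split; first by apply: Ha' => //; apply/andP; split.
        apply: le_trans (Hb' y yP _); first lra.
        by apply/andP; split.
      move=> p pP; case: (cons p pP) => hp.
        rewrite ger0_norm; lra.
      rewrite ler0_norm; lra.
    apply/andP; split; nra.
  -
    exfalso; case: (cons z0 z0P); move: z0ab => /andP[? ?]; lra.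
have [xb|bx] := leP x b.
  have [yb|by'] := leP y b.
  -
    rewrite !T_mid ?ax ?xb ?yb //; last by apply/andP; split; lra.
    have hM : (y - x) / 2 <= M.
      apply: (HM ((x + y) / 2)).
        have h1 : a <= x <= b by apply/andP; split; lra.
        have h2 : a <= y <= b by apply/andP; split; lra.
        have := Ha' x xP h1; have := Hb' y yP h2.
        move=> ? ?; apply/andP; split; lra.
      move=> p pP; case: (cons p pP) => hp.
        rewrite ger0_norm; lra.
      rewrite ler0_norm; lra.
    have C0 : 0 <= C := le_trans (pw0 D) HC.
    have : 0 <= delta * C by apply: mulr_ge0 => //; lra.
    move=> ?; apply/andP; split; lra.
  -
    rewrite (T_right _ _ _ y) // (T_mid _ _ _ x) ?ax ?xb //.
    have h1 : pw delta (cc delta) <= pw delta (y - b + cc delta) by apply: pw_mono => //; lra.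
    have h2 : pw delta (y - b + cc delta) <= pw delta (y - b) + pw delta (cc delta).
      by apply: pw_sub => //; lra.
    have h3 : pw delta (y - b) <= C.
      have := HD y yP; move=> [_ h]; apply: pwC; lra.
    have hM : (b - x) / 2 <= M.
      apply: (HM ((b + x) / 2)).
        have hx1 : a <= x <= b by apply/andP; split; lra.
        have := Ha' x xP hx1; have := Hb' x xP hx1.
        move=> ? ?; apply/andP; split; lra.
      move=> p pP; case: (cons p pP) => hp.
        rewrite ger0_norm; lra.
      rewrite ler0_norm; lra.
    apply/andP; split; nra.
-
  have by' : b < y by lra.
  rewrite !T_right //.
  have h1 : pw delta (x - b + cc delta) <= pw delta (y - b + cc delta).
    by apply: pw_mono => //; lra.
  have h2 : pw delta (y - b + cc delta) <= pw delta (y - x) + pw delta (x - b + cc delta).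
    have -> : y - b + cc delta = (y - x) + (x - b + cc delta) by ring.
    by apply: pw_sub => //; lra.
  have h3 : pw delta (y - x) <= C.
    have := HD y yP; move=> [_ h]; apply: pwC; lra.
  apply/andP; split; nra.
Qed.

End T.

Lemma horner_charE (F : fieldType) n (A : 'M[F]_n) a :
  (char_poly A).[a] = \det (a%:M - A).
Proof.
rewrite /char_poly /char_poly_mx /determinant horner_sum; apply: eq_bigr => s _.
rewrite hornerM horner_exp !hornerE; congr (_ * _).
rewrite (big_morph _ (fun p q => hornerM p q a) (hornerC 1 a)).
by apply: eq_bigr => i _; rewrite !mxE !(hornerE, hornerMn).
Qed.

Lemma sylvester (F : comNzRingType) n (u : 'cV[F]_n) (v : 'rV[F]_n) :
  \det (1%:M - u *m v) = 1 - (v *m u) 0 0.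
Proof.
pose B := block_mx (1%:M : 'M[F]_n) u v (1%:M : 'M_1).
have E1 : block_mx 1%:M 0 (- v) 1%:M *m B = block_mx 1%:M u 0 (1%:M - v *m u).
  rewrite mulmx_block !mul1mx !mul0mx !addr0 ?add0r !mulNmx ?mulmx1.
  by rewrite addNr addrC.
have E2 : B *m block_mx 1%:M 0 (- v) 1%:M = block_mx (1%:M - u *m v) u 0 1%:M.
  rewrite mulmx_block ?mulmx1 ?mulmx0 ?mul1mx ?add0r ?addr0 ?mulmxN.
  by rewrite subrr.
have := congr1 determinant E1; have := congr1 determinant E2.
rewrite !det_mulmx ?det_lblock ?det_ublock ?det1 ?mul1r ?mulr1.
move=> <- ->; by rewrite det_mx11 !mxE.
Qed.

Lemma poly_eq_nz (R : realFieldType) (p q : {poly R}) :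
  (forall x, x != 0 -> p.[x] = q.[x]) -> p = q.
Proof.
move=> H; apply/eqP; rewrite -subr_eq0; apply/negPn/negP => nz.
set d := p - q in nz.
pose rs := [seq (i.+1)%:R : R | i <- iota 0 (size d)].
have := max_poly_roots nz.
move=> /(_ rs) Hr; suff: (size rs < size d)%N by rewrite size_map size_iota ltnn.
apply: Hr.
  apply/allP => r /mapP [i _ ->]; rewrite /root /d hornerD hornerN H ?subrr //.
  by rewrite pnatr_eq0.
rewrite map_inj_uniq ?iota_uniq // => i j /eqP; rewrite eqr_nat eqSS => /eqP.
done.
Qed.

Lemma char_poly_shift (R : realFieldType) n (L : 'M[R]_n) (c : R) :
  L *m (const_mx 1 : 'M_n) = 0 ->
  'X * char_poly (L + c *: const_mx 1) = ('X - (c * n%:R)%:P) * char_poly L.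
Proof.
move=> L1; apply: poly_eq_nz => x x0.
rewrite !hornerM hornerX hornerXsubC !horner_charE.
pose u : 'cV[R]_n := const_mx (c / x); pose v : 'rV[R]_n := const_mx 1.
have uv : u *m v = (c / x) *: const_mx 1.
  by apply/matrixP => i j; rewrite !mxE big_ord1 !mxE mulr1.
have E : x%:M - (L + c *: const_mx 1) = (x%:M - L) *m (1%:M - u *m v).
  rewrite uv mulmxBr mulmx1 mulmxBl mul_scalar_mx -scalemxAr L1 scaler0 subr0.
  rewrite scalerA mulrCA divff // mulr1; by rewrite opprD addrA.
rewrite E det_mulmx sylvester.
have -> : (v *m u) 0 0 = n%:R * (c / x).
  rewrite !mxE (eq_bigr (fun=> c / x)) ?sumr_const ?card_ord ?mulr_natl //.
  by move=> i _; rewrite !mxE mul1r.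
by field.
Qed.

Lemma sum_sqdiff (R : realFieldType) (I : Type) (r : seq I) (F : I -> R) (N : R) :
  (forall c : R, \sum_(i <- r) c = N * c) ->
  \sum_(i <- r) \sum_(j <- r) (F i - F j) ^+ 2 =
  2 * N * \sum_(i <- r) F i ^+ 2 - 2 * (\sum_(i <- r) F i) ^+ 2.
Proof.
move=> Hc.
transitivity (\sum_(i <- r) (N * F i ^+ 2 + \sum_(j <- r) F j ^+ 2 - 2 * F i * \sum_(j <- r) F j)).
  apply: eq_bigr => i _.
  transitivity (\sum_(j <- r) (F i ^+ 2 + F j ^+ 2 - 2 * F i * F j)).
    by apply: eq_bigr => j _; ring.
  by rewrite big_split big_split /= Hc sumrN mulr_sumr.
rewrite big_split big_split /= sumrN -mulr_sumr Hc.
rewrite -(mulr_suml _ _ (fun i => 2 * F i)) -mulr_sumr; ring.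
Qed.

Lemma cs_seq (R : realFieldType) (I : Type) (r : seq I) (F : I -> R) :
  (\sum_(i <- r) F i) ^+ 2 <= (size r)%:R * \sum_(i <- r) F i ^+ 2.
Proof.
have Hc : forall c : R, \sum_(i <- r) c = (size r)%:R * c.
  move=> c; elim: r => [|x r IH]; first by rewrite big_nil mul0r.
  by rewrite big_cons IH /= -addn1 natrD mulrDl mul1r addrC.
have := @sum_sqdiff _ _ r F _ Hc.
have : 0 <= \sum_(i <- r) \sum_(j <- r) (F i - F j) ^+ 2.
  by apply: sumr_ge0 => i _; apply: sumr_ge0 => j _; exact: sqr_ge0.
move=> h1 h2; rewrite h2 in h1; lra.
Qed.

Lemma sum_ord_const (R : realFieldType) n (c : R) : \sum_(i < n) c = n%:R * c.
Proof. by rewrite sumr_const card_ord mulr_natl. Qed.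

Set Implicit Arguments. Unset Strict Implicit.
Definition Qf (R : realType) n (v : 'rV[R]_n) (B : 'M[R]_n) :=
  \sum_j (v *m B) 0 j * v 0 j.

Lemma lap_J (R : realType) n (W : 'M[R]_n) :
  laplacian W *m (const_mx 1 : 'M_n) = 0.
Proof.
apply/matrixP => i j; rewrite /laplacian mulmxBl mul_diag_mx !mxE.
under [X in _ - X = _]eq_bigr => k _ do rewrite mxE mulr1.
by rewrite mulr1 subrr.
Qed.

Lemma Q_add (R : realType) n (v : 'rV[R]_n) B1 B2 c :
  Qf v (B1 + c *: B2) = Qf v B1 + c * Qf v B2.
Proof.
rewrite /Qf mulr_sumr -big_split; apply: eq_bigr => j _.
rewrite mulmxDr -scalemxAr !mxE /=; by rewrite mulrDl mulrA.
Qed.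

Lemma Q_J (R : realType) n (v : 'rV[R]_n) :
  Qf v (const_mx 1) = (\sum_i v 0 i) ^+ 2.
Proof.
rewrite /Qf expr2 mulr_sumr; apply: eq_bigr => j _.
rewrite !mxE; congr (_ * _); apply: eq_bigr => i _; by rewrite mxE mulr1.
Qed.

Lemma Q_eig (R : realType) n (v : 'rV[R]_n) A x :
  v *m A = x *: v -> Qf v A = x * \sum_j v 0 j ^+ 2.
Proof.
move=> H; rewrite /Qf H mulr_sumr; apply: eq_bigr => j _; by rewrite !mxE expr2 mulrA.
Qed.

Lemma Q_lap (R : realType) n (W : 'M[R]_n) (v : 'rV[R]_n) :
  (forall i j, W i j = W j i) ->
  2 * Qf v (laplacian W) = \sum_i \sum_j W i j * (v 0 i - v 0 j) ^+ 2.
Proof.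
move=> Ws.
have E1 : Qf v (laplacian W) =
  \sum_i \sum_j W i j * v 0 i ^+ 2 - \sum_j \sum_i v 0 i * W i j * v 0 j.
  rewrite /Qf /laplacian mulmxBr mul_mx_diag.
  rewrite (eq_bigr (fun j => v 0 j * (\sum_k W j k) * v 0 j - (\sum_i v 0 i * W i j) * v 0 j)); last first.
    by move=> j _; rewrite !mxE mulrBl.
  rewrite big_split /= sumrN; congr (_ - _).
    apply: eq_bigr => i _; rewrite mulr_sumr mulr_suml; apply: eq_bigr => k _; ring.
  by apply: eq_bigr => j _; rewrite mulr_suml.
have E2 : \sum_i \sum_j W i j * v 0 j ^+ 2 = \sum_i \sum_j W i j * v 0 i ^+ 2.
  rewrite exchange_big; apply: eq_bigr => i _; apply: eq_bigr => j _; by rewrite Ws.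
have E3 : \sum_j \sum_i v 0 i * W i j * v 0 j = \sum_i \sum_j W i j * (v 0 i * v 0 j).
  rewrite exchange_big; apply: eq_bigr => i _; apply: eq_bigr => j _; ring.
transitivity (\sum_i \sum_j W i j * v 0 i ^+ 2 + \sum_i \sum_j W i j * v 0 j ^+ 2
   - 2 * \sum_i \sum_j W i j * (v 0 i * v 0 j)).
  by rewrite E1 E2 E3; ring.
rewrite -big_split mulr_sumr -sumrN -big_split; apply: eq_bigr => i _.
rewrite -big_split mulr_sumr -sumrN -big_split; apply: eq_bigr => j _ /=; ring.
Qed.

Lemma pair_bound (R : realType) (n' : nat) (Y : nat -> R) i j :
  (i < n'.+1)%N -> (j < n'.+1)%N ->
  (Y i - Y j) ^+ 2 <= n'.+1%:R * \sum_(0 <= t < n') (Y t.+1 - Y t) ^+ 2.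
Proof.
wlog ij : i j / (i <= j)%N.
  move=> H hi hj; have [le|lt] := leqP i j; first exact: H.
  rewrite -sqrrN opprB; apply: H => //; exact: ltnW.
move=> hi hj.
have jn : (j <= n')%N by rewrite -ltnS.
set d := fun t => Y t.+1 - Y t.
have tel : Y j - Y i = \sum_(i <= t < j) d t by rewrite telescope_sumr.
rewrite -sqrrN opprB tel.
have cs := @cs_seq _ _ (index_iota i j) d.
rewrite size_iota in cs.
have X0 : 0 <= \sum_(i <= t < j) d t ^+ 2 by apply: sumr_ge0 => t _; exact: sqr_ge0.
have XS : \sum_(i <= t < j) d t ^+ 2 <= \sum_(0 <= t < n') d t ^+ 2.
  rewrite (@big_cat_nat _ _ _ i 0 n') ?leq0n ?(leq_trans ij jn) //=.
  rewrite [X in _ <= _ + X](@big_cat_nat _ _ _ j i n') //=.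
  have h1 : 0 <= \sum_(0 <= t < i) d t ^+ 2 by apply: sumr_ge0 => t _; exact: sqr_ge0.
  have h2 : 0 <= \sum_(j <= t < n') d t ^+ 2 by apply: sumr_ge0 => t _; exact: sqr_ge0.
  lra.
have jin : ((j - i)%:R <= n'.+1%:R :> R) by rewrite ler_nat; lia.
apply: le_trans cs _.
apply: le_trans (ler_wpM2l (ler0n _ _) XS) _.
apply: ler_wpM2r => //; apply: sumr_ge0 => t _; exact: sqr_ge0.
Qed.

Lemma term_le_sum (R : realType) n (F : 'I_n -> R) j :
  (forall i, 0 <= F i) -> F j <= \sum_i F i.
Proof.
move=> F0; rewrite (bigD1 j) //= lerDl; apply: sumr_ge0 => i _; exact: F0.
Qed.

Lemma reindex2 (R : realType) n (F : 'I_n -> 'I_n -> R) (f : 'I_n -> 'I_n) :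
  injective f -> \sum_i \sum_j F i j = \sum_i \sum_j F (f i) (f j).
Proof.
move=> finj; rewrite (reindex_inj finj); apply: eq_bigr => i _.
exact: (reindex_inj finj).
Qed.

Lemma path_bound (R : realType) n (W : 'M[R]_n) (w : R) (f : 'I_n -> 'I_n)
    (v : 'rV[R]_n) :
  (forall i j, 0 <= W i j) -> 0 <= w -> injective f ->
  (forall m m' : 'I_n, val m' = (val m).+1 -> w <= W (f m) (f m')) ->
  w * \sum_i \sum_j (v 0 i - v 0 j) ^+ 2 <=
  n%:R ^+ 3 * \sum_i \sum_j W i j * (v 0 i - v 0 j) ^+ 2.
Proof.
case: n => [|n'] in W f v *.
  by move=> *; rewrite !big_ord0 mulr0 mulr0.
move=> W0 w0 finj Hp.
have [Y Yf] : exists Y : nat -> R, forall m : 'I_n'.+1, v 0 (f m) = Y m.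
  by exists (fun t => v 0 (f (inord t))) => m; rewrite inord_val.
set S := \sum_(0 <= t < n') (Y t.+1 - Y t) ^+ 2.
have S0 : 0 <= S by apply: sumr_ge0 => t _; exact: sqr_ge0.
have Up : \sum_i \sum_j (v 0 i - v 0 j) ^+ 2 <= n'.+1%:R ^+ 3 * S.
  rewrite (reindex2 _ finj).
  apply: le_trans (_ : \sum_(i < n'.+1) \sum_(j < n'.+1) (n'.+1%:R * S) <= _).
    apply: ler_sum => i _; apply: ler_sum => j _; rewrite !Yf.
    exact: (pair_bound Y (ltn_ord i) (ltn_ord j)).
  rewrite !sumr_const !card_ord.
  suff -> : n'.+1%:R * S *+ n'.+1 *+ n'.+1 = n'.+1%:R ^+ 3 * S by exact: lexx.
  by ring.
have Lo : w * S <= \sum_i \sum_j W i j * (v 0 i - v 0 j) ^+ 2.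
  rewrite (reindex2 _ finj).
  pose g (m : 'I_n'.+1) := if (m < n')%N then w * (Y m.+1 - Y m) ^+ 2 else 0.
  apply: le_trans (_ : \sum_(m < n'.+1) g m <= _).
    rewrite big_ord_recr /= /g ltnn addr0 /S big_mkord mulr_sumr.
    apply: ler_sum => i _; rewrite /= ltn_ord; exact: lexx.
  apply: ler_sum => m _; rewrite /g.
  case: ifP => mn; last first.
    by apply: sumr_ge0 => j _; apply: mulr_ge0 => //; exact: sqr_ge0.
  have mn1 : (m.+1 < n'.+1)%N by rewrite ltnS.
  pose m' : 'I_n'.+1 := Ordinal mn1.
  rewrite (bigD1 m') //=.
  have h0 : 0 <= \sum_(j < n'.+1 | j != m') W (f m) (f j) * (v 0 (f m) - v 0 (f j)) ^+ 2.
    by apply: sumr_ge0 => j _; apply: mulr_ge0 => //; exact: sqr_ge0.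
  have h1 : w * (Y m.+1 - Y m) ^+ 2 <= W (f m) (f m') * (v 0 (f m) - v 0 (f m')) ^+ 2.
    rewrite !Yf /= -sqrrN opprB; apply: ler_wpM2r; first exact: sqr_ge0.
    by apply: Hp.
  lra.
apply: le_trans (ler_wpM2l w0 Up) _.
rewrite mulrCA; apply: ler_wpM2l => //; exact: exprn_ge0.
Qed.

Lemma quad_bound (R : realType) n (W : 'M[R]_n) (w : R) (f : 'I_n -> 'I_n) (v : 'rV[R]_n) :
  (1 < n)%N -> (forall i j, W i j = W j i) -> (forall i j, 0 <= W i j) -> 0 < w ->
  injective f ->
  (forall m m' : 'I_n, val m' = (val m).+1 -> w <= W (f m) (f m')) ->
  ((n%:R ^+ 3)^-1 * w) * \sum_j v 0 j ^+ 2 <=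
  Qf v (laplacian W + ((n%:R ^+ 3)^-1 * w / n%:R) *: const_mx 1).
Proof.
move=> n1 Ws W0 w0 finj Hp.
rewrite Q_add Q_J.
have HL := Q_lap v Ws.
have HP := path_bound v W0 (ltW w0) finj Hp.
have HD := @sum_sqdiff R _ (index_enum 'I_n) (fun i => v 0 i) n%:R (@sum_ord_const R n).
set Sq := \sum_j v 0 j ^+ 2 in HD *.
set Sm := \sum_i v 0 i in HD *.
set DD := \sum_i \sum_j _ in HD HP.
set SW := \sum_i \sum_j _ in HL HP.
set QL := Qf v (laplacian W) in HL *.
have DD0 : 0 <= DD by apply: sumr_ge0 => i _; apply: sumr_ge0 => j _; exact: sqr_ge0.
have N2 : (2 <= n%:R :> R) by rewrite ler_nat.
set N := n%:R in N2 HP HD *.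
have N0 : 0 < N by lra.
set u := (N ^+ 3)^-1 * w.
have u0 : 0 < u by rewrite /u mulr_gt0 // invr_gt0 exprn_gt0.
have H1 : u * DD <= SW.
  have h : u * DD = (N ^+ 3)^-1 * (w * DD) by rewrite /u mulrA.
  have h' : SW = (N ^+ 3)^-1 * (N ^+ 3 * SW).
    by rewrite mulrA mulVf ?mul1r // expf_neq0 // gt_eqF.
  rewrite h [X in _ <= X]h'; apply: ler_wpM2l => //.
  by rewrite invr_ge0 exprn_ge0 // ltW.
have H2 : Sm ^+ 2 <= N * Sq by lra.
suff : N * (u * Sq) <= N * (QL + u / N * Sm ^+ 2).
  by rewrite ler_pM2l.
have E : N * (QL + u / N * Sm ^+ 2) = N * (SW / 2) + u * Sm ^+ 2.
  rewrite -HL; field; rewrite gt_eqF //.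
rewrite E.
have H3 : N * (SW / 2) >= N * (u * (N * Sq - Sm ^+ 2)).
  rewrite ler_pM2l //; rewrite HD in H1; lra.
have H4 : 0 <= u * (N - 1) * (N * Sq - Sm ^+ 2).
  apply: mulr_ge0; [apply: mulr_ge0; lra | lra].
have E2 : N * (u * (N * Sq - Sm ^+ 2)) + u * Sm ^+ 2 = N * (u * Sq) + u * (N - 1) * (N * Sq - Sm ^+ 2).
  ring.
lra.
Qed.

Lemma spectral_gap (R : realType) n (W : 'M[R]_n) (w : R) (f : 'I_n -> 'I_n) (s : seq R) :
  (1 < n)%N -> (forall i j, W i j = W j i) -> (forall i j, 0 <= W i j) -> 0 < w ->
  injective f ->
  (forall m m' : 'I_n, val m' = (val m).+1 -> w <= W (f m) (f m')) ->
  sorted_eigenvalues (laplacian W) s -> (n%:R ^+ 3)^-1 * w <= s`_1.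
Proof.
move=> n1 Ws W0 w0 finj Hp [srt cp].
set mu := (n%:R ^+ 3)^-1 * w.
have N0 : (0 < n%:R :> R) by rewrite ltr0n; lia.
have mu0 : 0 < mu by rewrite /mu mulr_gt0 // invr_gt0 exprn_gt0.
set c := mu / n%:R.
set L := laplacian W.
set A := L + c *: const_mx 1.
have Heig : forall x, root (char_poly A) x -> mu <= x.
  move=> x; rewrite -eigenvalue_root_char => /eigenvalueP [v vA vnz].
  have Q := quad_bound v n1 Ws W0 w0 finj Hp.
  rewrite -/mu -/c -/L -/A (Q_eig vA) in Q.
  have Sq0 : 0 < \sum_j v 0 j ^+ 2.
    have [j vj] : exists j, v 0 j != 0.
      apply/existsP; apply: contraR vnz => /existsPn H; apply/eqP/rowP => j.
      by rewrite mxE; apply/eqP; move: (H j); rewrite negbK.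
    rewrite (bigD1 j) //=; apply: ltr_pwDl.
      by rewrite exprn_even_gt0 //.
    by apply: sumr_ge0 => i _; exact: sqr_ge0.
  by rewrite ler_pM2r in Q.
have E := @char_poly_shift _ _ L c (lap_J W).
rewrite -/L -/A in E.
have cn : c * n%:R = mu by rewrite /c divfK // gt_eqF.
rewrite cn in E.
have sz : size s = n.
  have := size_char_poly L; rewrite cp size_prod_XsubC; by case.
have Hr : forall x, x < mu -> x \in s -> x = 0.
  move=> x xmu xs.
  have : root ('X * char_poly A) x.
    by rewrite E rootM cp root_prod_XsubC xs orbT.
  rewrite rootM rootX => /orP[/eqP//|/Heig]; lra.
rewrite leNgt; apply/negP => s1mu.
rewrite -sz in n1.
case: s sz srt cp Hr s1mu n1 => [|s0 [|s1 s']] //= sz srt cp Hr s1mu _.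
have s01 : s0 <= s1 by move: srt => /andP[].
have e1 : s1 = 0 by apply: Hr; rewrite ?in_cons ?eqxx ?orbT.
have e0 : s0 = 0 by apply: Hr; rewrite ?in_cons ?eqxx ?orbT //; lra.
rewrite e0 e1 !big_cons subr0 in cp.
set h := \prod_(j <- s') ('X - j%:P) in cp.
have E2 : 'X * char_poly A = 'X * (('X - mu%:P) * ('X * h)).
  by rewrite E cp; ring.
have E3 := mulfI (negbT (@polyX_eq0 R)) E2.
have : root (char_poly A) 0 by rewrite E3 rootM rootM rootX eqxx orbT.
move/Heig; lra.
Qed.

Theorem lemma2 (R : realType) (k : R -> R) (sigma delta : R) (P : seq R)
    (a b : R) :
  (forall x, 0 <= x -> 0 < k x) ->
  (forall x y, 0 <= x -> x <= y -> k y <= k x) ->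
  0 < sigma -> 0 < delta -> delta <= 1 / 2 ->
  uniq P ->
  a < b ->
  (2 <= size [seq x <- P | (a <= x <= b)%R])%N ->
  seqmin P <= a -> b <= seqmax P ->
  let PD := [seq x <- P | a <= x <= b] in
  let a' := (a + seqmin PD) / 2 in
  let b' := (b + seqmax PD) / 2 in
  let M := sup [set y | exists2 x, a' <= x <= b' &
                          y = seqmin [seq `|x - p| | p <- P]] in
  let D := Num.max (a - seqmin P) (seqmax P - b) in
  let C := Num.max D (powR D (1 - delta)) in
  forall s : seq R,
    sorted_eigenvalues (laplacian (affinity k sigma delta a b P)) s ->
    ((size P)%:R ^+ 3)^-1 * k ((2 * M + delta * C) / sigma) <= s`_1.
Proof.
move=> kpos kmono sig0 d0 d1 Puniq ab PDsz Pmin Pmax PD a' b' M D C s Hs.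
have hd : 0 < delta <= 1/2 by apply/andP; split.
have NP : (1 < size P)%N.
  apply: leq_trans PDsz _; rewrite size_filter; exact: count_size.
have PDne : PD != [::] by rewrite -size_eq0 -lt0n; apply: leq_trans PDsz.
have [z0 z0PD] : exists z, z \in PD by exists (seqmin PD); exact: seqmin_mem.
have z0P : z0 \in P by move: z0PD; rewrite mem_filter => /andP[].
have z0ab : a <= z0 <= b by move: z0PD; rewrite mem_filter => /andP[].
have Ha' : forall z, z \in P -> a <= z <= b -> a' <= (a + z) / 2.
  move=> z zP zab; have : seqmin PD <= z by apply: seqmin_le; rewrite mem_filter zab.
  rewrite /a'; lra.
have Hb' : forall z, z \in P -> a <= z <= b -> (b + z) / 2 <= b'.
  move=> z zP zab; have : z <= seqmax PD by apply: seqmax_ge; rewrite mem_filter zab.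
  rewrite /b'; lra.
have a'b' : a' <= b'.
  have := Ha' z0 z0P z0ab; have := Hb' z0 z0P z0ab.
  move: z0ab => /andP[? ?]; lra.
let X := eval unfold M in M in match X with sup ?Y => pose E := Y end.
have ME : M = sup E by [].
have Pne : P != [::] by rewrite -size_eq0 -lt0n; apply: ltnW.
have dist_mem : forall x, seqmin [seq `|x - p| | p <- P] \in [seq `|x - p| | p <- P].
  by move=> x; apply: seqmin_mem; rewrite -size_eq0 size_map size_eq0.
have hasE : has_sup E.
  split; first by exists (seqmin [seq `|a' - p| | p <- P]); exists a' => //; rewrite lexx a'b'.
  exists (`|a'| + `|b'| + `|head 0 P|) => y [x /andP[xa xb] ->].
  have hP : head 0 P \in P by case: (P) Pne => //= ? ? _; exact: mem_head.
  apply: le_trans (_ : `|x - head 0 P| <= _).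
    by apply: seqmin_le; apply: map_f.
  apply: le_trans (ler_normB _ _) _.
  apply: lerD => //.
  have : `|x| <= `|a'| + `|b'|.
    rewrite ler_norml; apply/andP; split.
      have := ler_norm a'; have := ler_norm (- a'); rewrite normrN.
      have := normr_ge0 b'; lra.
    have := ler_norm b'; have := normr_ge0 a'; lra.
  done.
have HM : forall z r, a' <= z <= b' -> (forall p, p \in P -> r <= `|z - p|) -> r <= M.
  move=> z r zab Hr.
  have y0E : E (seqmin [seq `|z - p| | p <- P]) by exists z.
  have := sup_upper_bound hasE y0E; rewrite -ME.
  have [p pP ->] : exists2 p, p \in P & seqmin [seq `|z - p| | p <- P] = `|z - p|.
    by have /mapP [p pP ->] := dist_mem z; exists p.
  move=> h; exact: le_trans (Hr p pP) h.
have M0 : 0 <= M by apply: (HM a'); [rewrite lexx a'b' | move=> p _; exact: normr_ge0].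
have D0 : 0 <= D by rewrite /D le_max; apply/orP; left; lra.
have HC : pw R delta D <= C by rewrite /C /pw le_max lexx orbT.
have C0 : 0 <= C by rewrite /C le_max D0.
have HD : forall p, p \in P -> a - p <= D /\ p - b <= D.
  move=> p pP; have := seqmin_le R P p pP; have := seqmax_ge R P p pP.
  have h1 : a - seqmin P <= D by rewrite /D le_max lexx.
  have h2 : seqmax P - b <= D by rewrite /D le_max lexx orbT.
  move=> ? ?; split; lra.
have B0 : 0 <= 2 * M + delta * C by have := mulr_ge0 (ltW d0) C0; lra.
set w := k ((2 * M + delta * C) / sigma).
have w0 : 0 < w by apply: kpos; apply: divr_ge0 => //; exact: ltW.
set q := sort <=%R P.
have qsort : sorted <=%R q by apply: sort_sorted; exact: le_total.
have qsz : size q = size P by rewrite size_sort.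
have qmem : q =i P by apply: mem_sort.
have quniq : uniq q by rewrite sort_uniq.
have qmono : forall i j, (i < size P)%N -> (j < size P)%N -> (i <= j)%N -> q`_i <= q`_j.
  move=> i j hi hj hij; have h := sorted_leq_nth le_trans lexx 0 qsort.
  by apply: h; rewrite // inE qsz.
have fP : forall m : 'I_(size P), (index (q`_m)%R P < size P)%N.
  by move=> m; rewrite index_mem -qmem; apply: mem_nth; rewrite qsz.
pose f := fun m : 'I_(size P) => Ordinal (fP m).
have Pf : forall m, P`_(f m) = q`_m.
  by move=> m; rewrite /= nth_index // -qmem mem_nth // qsz.
have finj : injective f.
  move=> m m' e; apply/val_inj/eqP; rewrite -(nth_uniq 0 _ _ quniq) ?qsz ?ltn_ord //.
  by rewrite -Pf -Pf e.
apply: (@spectral_gap R (size P) (affinity k sigma delta a b P) w f s NP _ _ w0 finj _ Hs).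
- move=> i j; rewrite !mxE; congr k; congr (_ / _); exact: distrC.
- move=> i j; rewrite mxE; apply/ltW/kpos; apply: divr_ge0; [exact: normr_ge0 | exact: ltW].
move=> m m' mm'.
rewrite !mxE !Pf.
set x := q`_m; set y := q`_m'.
have xP : x \in P by rewrite -qmem mem_nth // qsz.
have yP : y \in P by rewrite -qmem mem_nth // qsz.
have hle : x <= y.
  apply: qmono; [exact: ltn_ord | exact: ltn_ord | rewrite mm'; exact: leqnSn].
have hne : y != x.
  rewrite /x /y nth_uniq; [|rewrite qsz; exact: ltn_ord|rewrite qsz; exact: ltn_ord|exact: quniq].
  by rewrite mm' (gtn_eqF (ltnSn _)).
have xy : x < y by rewrite lt_neqAle eq_sym hne hle.
have cons : forall p, p \in P -> p <= x \/ y <= p.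
  move=> p pP.
  have ip : (index p q < size P)%N by rewrite -qsz index_mem qmem.
  have pe : p = q`_(index p q) by rewrite nth_index // qmem.
  have [le|lt] := leqP (index p q) m.
    by left; rewrite pe; apply: qmono.
  by right; rewrite pe; apply: qmono => //; rewrite mm'.
have := gap R delta a b P M C D a' b' x y hd ab xP yP xy cons HM M0 Ha' Hb'
  (ex_intro2 _ _ z0 z0P z0ab) HD D0 HC.
move=> /andP[g0 g1].
rewrite distrC ger0_norm //.
apply: kmono; first by apply: divr_ge0 => //; exact: ltW.
rewrite ler_pM2r; [exact: g1 | by rewrite invr_gt0].
Qed.
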